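(* Let $n\in\mathbb{N}$, let $f_1,\ldots,f_n$ be Alpert multiwavelets of multiplicity $n$, and let $1\le k\le n$. For $j\ge1$ let $a_j$ be the real number with $P_{j,j-1}(x)-P_{j-1,j}(x)=a_jP_{j-1,j-1}(x)$. Then there are real numbers $c_j$ and $d_j$ such that, almost everywhere on $[-1,1]$, \[ f_k=\begin{cases}\displaystyle\sum_{j=(k+n)/2}^{n} c_j\,Q_{j,j}, & k+n \text{ even},\\[2mm] \displaystyle\frac12\sum_{j=(k+n+1)/2}^{n} a_j d_{j-1}\,Q_{j,j}+\sum_{j=(k+n-1)/2}^{n-1} d_j\,Q_{j+1,j}, & k+n\text{ odd}.\end{cases} \]
   Context: Alpert multiwavelets of multiplicity $n\in\mathbb{N}$: real functions $f_1,\ldots,f_n$ supported on $[-1,1]$ such that (i) the restriction of each $f_i$ to $(0,1)$ is a polynomial of degree at most $n-1$; (ii) $f_k(-t)=(-1)^{k+n-1}f_k(t)$ for $t\in(0,1)$; (iii) $\int_{-1}^1 f_i(t)f_j(t)\,dt=\delta_{i,j}$ for $1\le i,j\le n$; (iv) $\int_{-1}^1 f_k(t)t^i\,dt=0$ for $i=0,1,\ldots,k+n-2$. Type I Legendre–Angelesco polynomials: for integers $n,m\ge 0$ with $n+m\ge1$, $(A_{n,m},B_{n,m})$ is the unique pair of polynomials with $\deg A_{n,m}\le n-1$, $\deg B_{n,m}\le m-1$ (degree $\le -1$ meaning the zero polynomial) such that, writing $Q_{n,m}=A_{n,m}\chi_{[-1,0]}+B_{n,m}\chi_{[0,1]}$,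 one has $\int_{-1}^1 Q_{n,m}(x)x^k\,dx=0$ for $0\le k\le n+m-2$ and $\int_{-1}^1 Q_{n,m}(x)x^{n+m-1}\,dx=1$. Type II Legendre–Angelesco polynomials: for $n,m\ge0$, $P_{n,m}$ is the unique monic polynomial of degree $n+m$ with $\int_{-1}^0 P_{n,m}(x)x^k\,dx=0$ for $0\le k\le n-1$ and $\int_0^1 P_{n,m}(x)x^k\,dx=0$ for $0\le k\le m-1$. (The difference $P_{j,j-1}-P_{j-1,j}$ is a constant multiple of $P_{j-1,j-1}$, which defines $a_j$.) *)

(* Defs.v *)
(* the statement is purely algebraic (piecewise polynomials and
   their integrals), stated over an arbitrary real field R. *)
From HB Require Import structures.
From mathcomp Require Import all_boot all_order all_algebra.
Set Implicit Arguments. Unset Strict Implicit. Unset Printing Implicit Defensive.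
Import Order.TTheory GRing.Theory Num.Theory.
Local Open Scope ring_scope.

Definition pint (R : fieldType) (p : {poly R}) (a b : R) : R :=
  \sum_(i < size p) p`_i * (b ^+ i.+1 - a ^+ i.+1) / (i.+1)%:R.

(* A function on [-1,1] which equals the polynomial L on (-1,0) and the
   polynomial P on (0,1) (a.e. determined by the pair (L,P)).
   pwint L P = \int_{-1}^1 of that function. *)
Definition pwint (R : fieldType) (L P : {poly R}) : R :=
  pint L (-1) 0 + pint P 0 1.

(* Type I Legendre-Angelesco: Q_{n,m} = QA n m on [-1,0], QB n m on [0,1]. *)
Definition is_typeI (R : fieldType) (QA QB : nat -> nat -> {poly R}) : Prop :=
  forall n m : nat, (0 < n + m)%N ->
    [/\ (size (QA n m) <= n)%N, (size (QB n m) <= m)%N,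
        (forall k : nat, (k.+2 <= n + m)%N ->
            pwint (QA n m * 'X^k) (QB n m * 'X^k) = 0)
      & pwint (QA n m * 'X^(n + m - 1)) (QB n m * 'X^(n + m - 1)) = 1].

Definition is_typeII (R : fieldType) (P : nat -> nat -> {poly R}) : Prop :=
  forall n m : nat,
    [/\ P n m \is monic, size (P n m) = (n + m).+1,
        (forall k : nat, (k < n)%N -> pint (P n m * 'X^k) (-1) 0 = 0)
      & (forall k : nat, (k < m)%N -> pint (P n m * 'X^k) 0 1 = 0)].

(* Alpert multiwavelets f_1..f_n of multiplicity n: f_i equals fL i on (-1,0)
   and fR i on (0,1), and vanishes outside [-1,1]. *)
Definition is_alpert (R : realFieldType) (n : nat) (fL fR : nat -> {poly R})
  : Prop :=
  forall i : nat, (1 <= i <= n)%N ->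
    [/\ (size (fR i) <= n)%N,
        (forall t : R, 0 < t < 1 ->
            (fL i).[- t] = (-1) ^+ (i + n - 1) * (fR i).[t]),
        (forall j : nat, (1 <= j <= n)%N ->
            pwint (fL i * fL j) (fR i * fR j) = (i == j)%:R)
      & (forall m : nat, (m <= i + n - 2)%N ->
            pwint (fL i * 'X^m) (fR i * 'X^m) = 0)].

(* Main.v *)
Require Import Defs.
From HB Require Import structures.
From mathcomp Require Import all_boot all_order all_algebra.
From mathcomp Require Import zify ring.
Set Implicit Arguments. Unset Strict Implicit. Unset Printing Implicit Defensive.
Import Order.TTheory GRing.Theory Num.Theory.
Local Open Scope ring_scope.

Section S.
Variable R : realFieldType.
Implicit Types (p q L M : {poly R}) (a b : R).

Lemma pintE p a b N : (size p <= N)%N ->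
  pint p a b = \sum_(i < N) p`_i * (b ^+ i.+1 - a ^+ i.+1) / (i.+1)%:R.
Proof.
move=> hN; rewrite /pint (big_ord_widen _ (fun i => p`_i * (b ^+ i.+1 - a ^+ i.+1) / (i.+1)%:R) hN).
rewrite big_mkcond /=; apply: eq_bigr => i _.
case: ltnP => // hi; by rewrite nth_default // !mul0r.
Qed.

Lemma pint_add p q a b : pint (p + q) a b = pint p a b + pint q a b.
Proof.
rewrite (@pintE (p+q) a b (maxn (size p) (size q))) ?size_polyD //.
rewrite (@pintE p a b (maxn (size p) (size q))) ?leq_maxl //.
rewrite (@pintE q a b (maxn (size p) (size q))) ?leq_maxr //.
rewrite -big_split /=; apply: eq_bigr => i _; rewrite coefD; by rewrite !mulrDl.
Qed.

Lemma pint_scale (c : R) p (a b : R) : pint (c *: p) a b = c * pint p a b.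
Proof.
rewrite (@pintE (c *: p) a b (size p)) ?size_scale_leq //.
rewrite /pint mulr_sumr; apply: eq_bigr => i _; by rewrite coefZ !mulrA.
Qed.

Lemma pint0 (a b : R) : pint 0 a b = 0.
Proof. by rewrite /pint size_poly0 big_ord0. Qed.

Lemma pint_opp p a b : pint (- p) a b = - pint p a b.
Proof. by rewrite -scaleN1r pint_scale mulN1r. Qed.

Lemma pint_sub p q a b : pint (p - q) a b = pint p a b - pint q a b.
Proof. by rewrite pint_add pint_opp. Qed.

Lemma pint_sum (I : Type) (r : seq I) (P : pred I) (F : I -> {poly R}) a b :
  pint (\sum_(i <- r | P i) F i) a b = \sum_(i <- r | P i) pint (F i) a b.
Proof.
exact: (big_morph (fun p => pint p a b) (fun p q => pint_add p q a b) (pint0 a b)).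
Qed.

Lemma pint_Xn t a b : pint 'X^t a b = (b ^+ t.+1 - a ^+ t.+1) / (t.+1)%:R.
Proof.
rewrite /pint size_polyXn big_ord_recr /= big1 ?add0r.
  by rewrite coefXn eqxx mul1r.
move=> i _; rewrite coefXn; by rewrite (ltn_eqF (ltn_ord i)) !mul0r.
Qed.

Lemma poly_expand p d : (size p <= d)%N -> p = \sum_(i < d) p`_i *: 'X^i.
Proof.
move=> hd; rewrite -poly_def; apply/polyP => i; rewrite coef_poly.
case: ltnP => // hi; rewrite nth_default //; exact: leq_trans hd hi.
Qed.

Lemma pint_expand p q d a b : (size p <= d)%N ->
  pint (p * q) a b = \sum_(i < d) p`_i * pint ('X^i * q) a b.
Proof.
move=> hd; rewrite {1}(poly_expand hd) mulr_suml pint_sum.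
apply: eq_bigr => i _; by rewrite -scalerAl pint_scale.
Qed.

Lemma size_compN p : size (p \Po - 'X) = size p.
Proof. by apply: size_comp_poly2; rewrite size_opp size_polyX. Qed.

Lemma pint_compN q a b : pint (q \Po - 'X) a b = pint q (- b) (- a).
Proof.
rewrite comp_polyE pint_sum [in RHS]/pint.
apply: eq_bigr => i _; rewrite pint_scale -scaleN1r exprZn pint_scale pint_Xn.
rewrite -[RHS]mulrA; congr (_ * _).
rewrite [LHS]mulrA; congr (_ * _).
rewrite mulrBr (exprNn a) (exprNn b) [(-1) ^+ i.+1]exprS !mulN1r !mulNr opprK addrC.
done.
Qed.

Definition pr (L M p : {poly R}) := pwint (L * p) (M * p).
Definition mom (L M : {poly R}) (m : nat) := pr L M 'X^m.

Lemma pr_addl L1 L2 M1 M2 p : pr (L1 + L2) (M1 + M2) p = pr L1 M1 p + pr L2 M2 p.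
Proof. rewrite /pr /pwint !mulrDl !pint_add; by rewrite addrACA. Qed.

Lemma pr_scalel (c : R) L M p : pr (c *: L) (c *: M) p = c * pr L M p.
Proof. by rewrite /pr /pwint -!scalerAl !pint_scale mulrDr. Qed.

Lemma pr_oppl L M p : pr (- L) (- M) p = - pr L M p.
Proof. by rewrite -!scaleN1r pr_scalel mulN1r. Qed.

Lemma pr_subl L1 L2 M1 M2 p : pr (L1 - L2) (M1 - M2) p = pr L1 M1 p - pr L2 M2 p.
Proof. by rewrite pr_addl pr_oppl. Qed.

Lemma pr_suml (I : Type) (r : seq I) (P : pred I) (F G : I -> {poly R}) p :
  pr (\sum_(i <- r | P i) F i) (\sum_(i <- r | P i) G i) p =
  \sum_(i <- r | P i) pr (F i) (G i) p.
Proof. by rewrite /pr /pwint !mulr_suml !pint_sum -big_split. Qed.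

Lemma pr_addr L M p q : pr L M (p + q) = pr L M p + pr L M q.
Proof. rewrite /pr /pwint !mulrDr !pint_add; by rewrite addrACA. Qed.

Lemma pr_scaler (c : R) L M p : pr L M (c *: p) = c * pr L M p.
Proof. by rewrite /pr /pwint -!scalerAr !pint_scale mulrDr. Qed.

Lemma pr_sumr (I : Type) (r : seq I) (P : pred I) (F : I -> {poly R}) L M :
  pr L M (\sum_(i <- r | P i) F i) = \sum_(i <- r | P i) pr L M (F i).
Proof. by rewrite /pr /pwint !mulr_sumr !pint_sum -big_split. Qed.

Lemma mom_subl L1 L2 M1 M2 m : mom (L1 - L2) (M1 - M2) m = mom L1 M1 m - mom L2 M2 m.
Proof. exact: pr_subl. Qed.
Lemma mom_addl L1 L2 M1 M2 m : mom (L1 + L2) (M1 + M2) m = mom L1 M1 m + mom L2 M2 m.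
Proof. exact: pr_addl. Qed.
Lemma mom_scalel (c : R) L M m : mom (c *: L) (c *: M) m = c * mom L M m.
Proof. exact: pr_scalel. Qed.

Lemma mom_refl L M m :
  mom (M \Po - 'X) (L \Po - 'X) m = (-1) ^+ m * mom L M m.
Proof.
have hX : 'X^m = (((-1) ^+ m) *: 'X^m) \Po (- 'X) :> {poly R}.
  rewrite comp_polyZ comp_Xn_poly -scaleN1r exprZn scalerA.
  by rewrite -expr2 sqrr_sign scale1r.
rewrite /mom /pr /pwint {1 2}hX -!comp_polyM !pint_compN oppr0 opprK.
rewrite -!scalerAr !pint_scale -mulrDr; by rewrite addrC.
Qed.

Lemma pr_typeII (P : nat -> nat -> {poly R}) (A B : {poly R}) n m :
  is_typeII P -> (size A <= n)%N -> (size B <= m)%N -> pr A B (P n m) = 0.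
Proof.
move=> hP hA hB; have [_ _ h1 h2] := hP n m.
rewrite /pr /pwint (pint_expand _ _ _ hA) (pint_expand _ _ _ hB).
rewrite !big1 ?addr0 // => i _; by rewrite [_ * P n m]mulrC ?h1 ?h2 ?mulr0.
Qed.

Lemma pr_top L M (p : {poly R}) N : p \is monic -> size p = N.+1 ->
  (forall m, (m < N)%N -> mom L M m = 0) -> pr L M p = mom L M N.
Proof.
move=> hm hs h0; rewrite (poly_expand (leqnn (size p))) pr_sumr hs big_ord_recr /=.
rewrite big1 ?add0r.
  rewrite pr_scaler; have := monicP hm; rewrite lead_coefE hs /= => ->.
  by rewrite mul1r.
move=> i _; by rewrite pr_scaler; have := h0 i (ltn_ord i); rewrite /mom => ->; rewrite mulr0.
Qed.

Definition st1 (s : nat) := s./2.+1.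
Definition st2 (s : nat) := s.+1./2.

Lemma st_sum s : (st1 s + st2 s = s.+1)%N.
Proof.
have e : s.+1./2 = (odd s + s./2)%N := uphalf_half s.
rewrite /st1 /st2 e; have := odd_double_half s.
rewrite -addnn; move: (odd s) (s./2) => b h; case: b => /=; lia.
Qed.

Lemma st_le s d : (s < d + d)%N -> (st1 s <= d)%N /\ (st2 s <= d)%N.
Proof.
have e : s.+1./2 = (odd s + s./2)%N := uphalf_half s.
rewrite /st1 /st2 e; have := odd_double_half s.
rewrite -addnn; move: (odd s) (s./2) => b h; case: b => /=; lia.
Qed.



Lemma sum_pairs (g : nat -> {poly R}) n :
  \sum_(0 <= s < n + n) g s = \sum_(0 <= j < n) (g j.*2 + g j.*2.+1).
Proof.
elim: n => [|n IH]; first by rewrite !big_geq.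
rewrite addnS addSn !big_nat_recr //= ?IH -?addnn ?addrA //; lia.
Qed.

Lemma comp_sum (I : Type) (r : seq I) (P : pred I) (F : I -> {poly R}) q :
  (\sum_(i <- r | P i) F i) \Po q = \sum_(i <- r | P i) (F i \Po q).
Proof.
exact: (big_morph (fun p => p \Po q) (fun p p' => comp_polyD p p' q) (comp_poly0 q)).
Qed.

Lemma st_even j : st1 j.*2 = j.+1 /\ st2 j.*2 = j.
Proof. by rewrite /st1 /st2 doubleK; split => //; exact: uphalf_double. Qed.

Lemma st_odd j : st1 j.*2.+1 = j.+1 /\ st2 j.*2.+1 = j.+1.
Proof.
rewrite /st1 /st2; split; first by rewrite -[(j.*2.+1)./2]/(uphalf j.*2) uphalf_double.
by rewrite -[j.*2.+2]/(j.+1).*2 doubleK.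
Qed.

Lemma two_neq0 : (2%:R : R) != 0.
Proof. by rewrite pnatr_eq0. Qed.

Lemma asm_even (U V : nat -> nat -> {poly R}) (b w : nat -> R) n (F G : {poly R}) :
  (forall j, V j.+1 j.+1 \Po - 'X = - U j.+1 j.+1) ->
  (forall j, V j.+1 j \Po - 'X = U j.+1 j + b j.+1 *: U j.+1 j.+1) ->
  F = \sum_(0 <= s < n + n) w s *: U (st1 s) (st2 s) ->
  G = \sum_(0 <= s < n + n) w s *: V (st1 s) (st2 s) ->
  F = - (G \Po - 'X) ->
  F = \sum_(0 <= j < n) (w j.*2.+1 - 2%:R^-1 * (b j.+1 * w j.*2)) *: U j.+1 j.+1.
Proof.
move=> h1 h2 hF hG hFG.
have e2 : F = 2%:R^-1 *: (F - (G \Po - 'X)).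
  have hG' : G \Po - 'X = - F by rewrite hFG opprK.
  rewrite hG' opprK -mulr2n -scaler_nat scalerA.
  by rewrite mulVf ?two_neq0 // scale1r.
rewrite e2 {1}hF hG comp_sum -sumrB sum_pairs scaler_sumr.
apply: eq_bigr => j _.
have [e1 e1'] := st_even j; have [o1 o1'] := st_odd j.
rewrite !comp_polyZ e1 e1' o1 o1' h1 h2.
rewrite [w j.*2 *: (_ + _)]scalerDr opprD addNKr scalerN opprK -scalerDl.
rewrite scalerA -scaleNr -scalerDl scalerA; congr (_ *: _).
by field.
Qed.

Lemma asm_odd (U V : nat -> nat -> {poly R}) (b w : nat -> R) n (F G : {poly R}) :
  (forall j, V j.+1 j.+1 \Po - 'X = - U j.+1 j.+1) ->
  (forall j, V j.+1 j \Po - 'X = U j.+1 j + b j.+1 *: U j.+1 j.+1) ->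
  F = \sum_(0 <= s < n + n) w s *: U (st1 s) (st2 s) ->
  G = \sum_(0 <= s < n + n) w s *: V (st1 s) (st2 s) ->
  F = G \Po - 'X ->
  F = \sum_(0 <= j < n) (w j.*2 *: U j.+1 j + (2%:R^-1 * (b j.+1 * w j.*2)) *: U j.+1 j.+1).
Proof.
move=> h1 h2 hF hG hFG.
have e2 : F = 2%:R^-1 *: (F + (G \Po - 'X)).
  rewrite -hFG -mulr2n -scaler_nat scalerA.
  by rewrite mulVf ?two_neq0 // scale1r.
rewrite e2 {1}hF hG comp_sum -big_split sum_pairs scaler_sumr.
apply: eq_bigr => j _.
have [e1 e1'] := st_even j; have [o1 o1'] := st_odd j.
rewrite !comp_polyZ e1 e1' o1 o1' h1 h2 /=.
rewrite scalerN subrr addr0 [w j.*2 *: (_ + _)]scalerDr addrA -scalerDl scalerDr !scalerA.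
congr (_ *: _ + _ *: _); by field.
Qed.


Lemma compNN (p : {poly R}) : p \Po - 'X \Po - 'X = p.
Proof.
rewrite -comp_polyA.
have -> : (- 'X) \Po (- 'X) = 'X :> {poly R}.
  by rewrite -{2}scaleN1r comp_polyZ comp_polyX scaleN1r opprK.
by rewrite comp_polyXr.
Qed.

Lemma shift_even (U : nat -> nat -> {poly R}) (w b : nat -> R) n j0 :
  (1 <= j0 <= n.+1)%N -> (forall s, (s < j0.*2.-1)%N -> w s = 0) ->
  \sum_(0 <= j < n) (w j.*2.+1 - 2%:R^-1 * (b j.+1 * w j.*2)) *: U j.+1 j.+1 =
  \sum_(j0 <= j < n.+1) (w j.*2.-1 - 2%:R^-1 * (b j * w j.*2.-2)) *: U j j.
Proof.
move=> /andP [h1 h2] hw.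
have z : \sum_(1 <= j < j0) (w j.*2.-1 - 2%:R^-1 * (b j * w j.*2.-2)) *: U j j = 0.
  rewrite big_nat_cond big1 // => j /andP [/andP [hj1 hj2] _].
  by rewrite !hw ?mulr0 ?subr0 ?scale0r //; lia.
rewrite -[RHS]add0r -[X in _ = X + _]z -(big_cat_nat h1 h2) big_add1 /=.
by [].
Qed.

Lemma shift_odd (U : nat -> nat -> {poly R}) (w b : nat -> R) n j1 :
  (j1 < n)%N -> (forall s, (s < j1.*2)%N -> w s = 0) ->
  \sum_(0 <= j < n) (w j.*2 *: U j.+1 j + (2%:R^-1 * (b j.+1 * w j.*2)) *: U j.+1 j.+1) =
  2%:R^-1 *: \sum_(j1.+1 <= j < n.+1) (b j * w (j - 1)%N.*2) *: U j j
  + \sum_(j1 <= j < n) w j.*2 *: U j.+1 j.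
Proof.
move=> hj hw; rewrite big_split /= addrC.
have z1 : \sum_(0 <= j < j1) w j.*2 *: U j.+1 j = 0.
  rewrite big_nat_cond big1 // => j /andP [/andP [hj1 hj2] _].
  by rewrite hw ?scale0r //; lia.
have z2 : \sum_(0 <= j < j1) (2%:R^-1 * (b j.+1 * w j.*2)) *: U j.+1 j.+1 = 0.
  rewrite big_nat_cond big1 // => j /andP [/andP [hj1 hj2] _].
  by rewrite hw ?mulr0 ?scale0r //; lia.
rewrite [X in X + _ = _](@big_cat_nat _ _ _ j1) ?(ltnW hj) //= z2 add0r.
rewrite [X in _ + X = _](@big_cat_nat _ _ _ j1) ?(ltnW hj) //= z1 add0r.
congr (_ + _); rewrite big_add1 /= scaler_sumr; apply: eq_bigr => j _.
by rewrite subn1 /= scalerA mulrA.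
Qed.

Lemma roots01 (g : {poly R}) : (forall t : R, 0 < t < 1 -> g.[t] = 0) -> g = 0.
Proof.
move=> h; apply/eqP; apply: contraT => hg.
set rs := [seq ((i.+2)%:R : R)^-1 | i <- iota 0 (size g)].
have := max_poly_roots hg (rs := rs).
rewrite size_map size_iota ltnn; apply.
  apply/allP => x /mapP [i _ ->]; apply/rootP; apply: h.
  rewrite invr_gt0 ltr0n /= invf_lt1 ?ltr0n //.
  by rewrite ltr1n.
rewrite map_inj_uniq ?iota_uniq // => x y /invr_inj /eqP.
by rewrite eqr_nat => /eqP [].
Qed.
Variables (QA QB : nat -> nat -> {poly R}).
Hypothesis hI : is_typeI QA QB.

Definition QsA s := QA (st1 s) (st2 s).
Definition QsB s := QB (st1 s) (st2 s).

Lemma Qpos s : (0 < st1 s + st2 s)%N.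
Proof. by rewrite st_sum. Qed.

Lemma Qs_size s d : (s < d + d)%N -> (size (QsA s) <= d)%N /\ (size (QsB s) <= d)%N.
Proof.
move=> hs; have [h1 h2] := st_le hs.
have [a1 a2 _ _] := hI (Qpos s).
by split; [exact: leq_trans a1 h1 | exact: leq_trans a2 h2].
Qed.

Lemma Qs_mom0 s m : (m < s)%N -> mom (QsA s) (QsB s) m = 0.
Proof.
move=> hm; have [_ _ h _] := hI (Qpos s).
by apply: h; rewrite st_sum.
Qed.

Lemma Qs_mom1 s : mom (QsA s) (QsB s) s = 1.
Proof.
have [_ _ _ h] := hI (Qpos s).
by move: h; rewrite st_sum subn1.
Qed.

Section Inj.
Variable d : nat.

Definition vec (L M : {poly R}) : 'rV[R]_(d + d) :=
  row_mx (\row_(i < d) L`_i) (\row_(i < d) M`_i).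

Definition Mom : 'M[R]_(d + d) :=
  col_mx (\matrix_(i < d, m < d + d) pint 'X^(i + m) (-1) 0)
         (\matrix_(i < d, m < d + d) pint 'X^(i + m) 0 1).

Lemma momE L M (m : 'I_(d + d)) : (size L <= d)%N -> (size M <= d)%N ->
  mom L M m = (vec L M *m Mom) 0 m.
Proof.
move=> hL hM; rewrite /vec /Mom mul_row_col mxE !mxE.
rewrite /mom /pr /pwint (pint_expand _ _ _ hL) (pint_expand _ _ _ hM).
congr (_ + _); apply: eq_bigr => i _; by rewrite !mxE -exprD.
Qed.

Definition Mq : 'M[R]_(d + d) := \matrix_(s < d + d, j < d + d) vec (QsA s) (QsB s) 0 j.

Lemma MqE (s m : 'I_(d + d)) : (Mq *m Mom) s m = mom (QsA s) (QsB s) m.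
Proof.
have [h1 h2] := Qs_size (ltn_ord s).
rewrite (momE _ h1 h2).
have -> : (Mq *m Mom) s m = row s (Mq *m Mom) 0 m by rewrite [RHS]mxE.
rewrite row_mul.
have -> : row s Mq = vec (QsA s) (QsB s) by apply/rowP => j; rewrite !mxE.
done.
Qed.

Lemma Mom_unit : Mom \in unitmx.
Proof.
have ht : is_trig_mx (Mq *m Mom)^T.
  apply/forallP => i; apply/forallP => j; apply/implyP => hij.
  by rewrite mxE MqE Qs_mom0.
have := det_trig ht; rewrite det_tr det_mulmx.
rewrite big1 => [h|i _]; last by rewrite mxE MqE Qs_mom1.
rewrite unitmxE unitfE; apply/eqP => h0; move: h; rewrite h0 mulr0.
by move/eqP; rewrite eq_sym oner_eq0.
Qed.

Lemma inj L M : (size L <= d)%N -> (size M <= d)%N ->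
  (forall m, (m < d + d)%N -> mom L M m = 0) -> L = 0 /\ M = 0.
Proof.
move=> hL hM h0.
have hv : vec L M = 0.
  have : vec L M *m Mom = 0.
    by apply/rowP => m; rewrite -momE // mxE h0.
  by move=> e; rewrite -(mulmxK Mom_unit (vec L M)) e mul0mx.
split; apply/polyP => i; rewrite coef0; (case: (ltnP i d) => hi;
   [| by rewrite nth_default // (leq_trans _ hi)]).
- by have := congr1 (fun v : 'rV[R]_(d + d) => v 0 (lshift d (Ordinal hi))) hv; rewrite row_mxEl !mxE.
- by have := congr1 (fun v : 'rV[R]_(d + d) => v 0 (rshift d (Ordinal hi))) hv; rewrite row_mxEr !mxE.
Qed.
End Inj.

Lemma sum_delta (N K : nat) (c : R) (F : nat -> {poly R}) : (K < N)%N ->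
  \sum_(0 <= s < N) (if s == K then c else 0) *: F s = c *: F K.
Proof.
move=> hK; rewrite (bigD1_seq K) /=; last by apply: iota_uniq.
  rewrite eqxx big1 ?addr0 // => i /negbTE ->; by rewrite scale0r.
by rewrite mem_index_iota.
Qed.

Lemma size_subZ d (p q : {poly R}) (c : R) : (size p <= d)%N -> (size q <= d)%N ->
  (size (p - c *: q)%R <= d)%N.
Proof.
move=> hp hq; apply: leq_trans (size_polyD _ _) _; rewrite geq_max hp size_polyN.
exact: leq_trans (size_scale_leq _ _) hq.
Qed.

Lemma Exp d r : forall K, (K + r = d + d)%N -> forall L M,
  (size L <= d)%N -> (size M <= d)%N -> (forall m, (m < K)%N -> mom L M m = 0) ->
  exists w : nat -> R, (forall s, (s < K)%N -> w s = 0) /\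
    L = \sum_(0 <= s < d + d) w s *: QsA s /\ M = \sum_(0 <= s < d + d) w s *: QsB s.
Proof.
elim: r => [|r IH] K hK L M hL hM h0.
  rewrite addn0 in hK; subst K; have [-> ->] := inj hL hM h0.
  exists (fun _ => 0); split => //.
  by split; rewrite big1 // => i _; rewrite scale0r.
have hKd : (K < d + d)%N by rewrite -hK; lia.
set mu := mom L M K.
have [h1 h2] := Qs_size hKd.
have hK' : (K.+1 + r = d + d)%N by rewrite -hK addSnnS.
have h0' : forall m, (m < K.+1)%N ->
    mom (L - mu *: QsA K) (M - mu *: QsB K) m = 0.
  move=> m; rewrite ltnS leq_eqVlt => /orP [/eqP ->|hm].
    rewrite mom_subl mom_scalel Qs_mom1 mulr1 /mu; by rewrite subrr.
  rewrite mom_subl mom_scalel Qs_mom0 // mulr0 subr0; exact: h0.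
have [w' [hw0 [hL' hM']]] := IH _ hK' _ _ (@size_subZ d L (QsA K) mu hL h1) (@size_subZ d M (QsB K) mu hM h2) h0'.
exists (fun s => w' s + (if s == K then mu else 0)); split.
  move=> s hs; rewrite hw0 ?(ltn_eqF hs) ?addr0 //; exact: ltnW.
split.
- under eq_bigr do rewrite scalerDl.
  by rewrite big_split /= -hL' sum_delta // subrK.
- under eq_bigr do rewrite scalerDl.
  by rewrite big_split /= -hM' sum_delta // subrK.
Qed.

Lemma QI_size n m : (0 < n + m)%N -> (size (QA n m) <= n)%N /\ (size (QB n m) <= m)%N.
Proof. by move=> h; have [? ? _ _] := hI h. Qed.

Lemma QI_mom0 n m k : (k.+2 <= n + m)%N -> mom (QA n m) (QB n m) k = 0.
Proof. move=> hk; have [_ _ h _] := hI (ltn_trans (ltn0Sn _) hk); exact: h. Qed.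

Lemma QI_mom1 n m k : (0 < n + m)%N -> k = (n + m - 1)%N -> mom (QA n m) (QB n m) k = 1.
Proof. by move=> hp ->; have [_ _ _ h] := hI hp. Qed.

Lemma sizeS (p : {poly R}) d e : (size p <= d)%N -> (d <= e)%N -> (size p <= e)%N.
Proof. exact: leq_trans. Qed.

Lemma L1 j : QB j.+1 j.+1 \Po - 'X = - QA j.+1 j.+1 /\ QA j.+1 j.+1 \Po - 'X = - QB j.+1 j.+1.
Proof.
have hp : (0 < j.+1 + j.+1)%N by [].
have [sA sB] := QI_size hp.
have hs : forall p q : {poly R}, (size p <= j.+1)%N -> (size q <= j.+1)%N ->
    (size (p \Po - 'X + q)%R <= j.+1)%N.
  move=> p q h1 h2; apply: leq_trans (size_polyD _ _) _; by rewrite geq_max size_compN h1.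
have hm0 : forall m, (m < j.+1 + j.+1)%N ->
    mom (QB j.+1 j.+1 \Po - 'X + QA j.+1 j.+1) (QA j.+1 j.+1 \Po - 'X + QB j.+1 j.+1) m = 0.
  move=> m hm; rewrite mom_addl mom_refl.
  have [hm1|hm1] := ltnP m.+1 (j.+1 + j.+1).
    by rewrite QI_mom0 ?mulr0 ?addr0 //; lia.
  have em : m = (j.*2).+1 by lia.
  rewrite (QI_mom1 hp) ?em; last lia.
  by rewrite -signr_odd /= odd_double /= mulN1r addNr.
have [h1 h2] := inj (hs _ _ sB sA) (hs _ _ sA sB) hm0.
split; apply/eqP; by rewrite -addr_eq0 ?h1 ?h2.
Qed.

Variables (P : nat -> nat -> {poly R}) (a : nat -> R).
Hypothesis hII : is_typeII P.
Hypothesis hPa : forall j : nat, (1 <= j)%N ->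
     P j (j - 1)%N - P (j - 1)%N j = a j *: P (j - 1)%N (j - 1)%N.

Lemma L2 j : QB j.+1 j \Po - 'X = QA j.+1 j + a j.+1 *: QA j.+1 j.+1 /\
             QA j.+1 j \Po - 'X = QB j.+1 j + a j.+1 *: QB j.+1 j.+1.
Proof.
have hp1 : (0 < j.+1 + j)%N by [].
have hp2 : (0 < j.+1 + j.+1)%N by [].
have [sA1 sB1] := QI_size hp1.
have [sA2 sB2] := QI_size hp2.
set HL := QB j.+1 j \Po - 'X - QA j.+1 j - a j.+1 *: QA j.+1 j.+1.
set HM := QA j.+1 j \Po - 'X - QB j.+1 j - a j.+1 *: QB j.+1 j.+1.
have sHL : (size HL <= j.+1)%N.
  apply: size_subZ => //; apply: leq_trans (size_polyD _ _) _.
  by rewrite geq_max size_polyN sA1 size_compN (leq_trans sB1).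
have sHM : (size HM <= j.+1)%N.
  apply: size_subZ => //; apply: leq_trans (size_polyD _ _) _.
  by rewrite geq_max size_polyN size_compN sA1 (leq_trans sB1).
have momH : forall m, mom HL HM m =
    (-1) ^+ m * mom (QA j.+1 j) (QB j.+1 j) m - mom (QA j.+1 j) (QB j.+1 j) m
    - a j.+1 * mom (QA j.+1 j.+1) (QB j.+1 j.+1) m.
  by move=> m; rewrite /HL /HM !mom_subl mom_scalel mom_refl.
have low : forall m, (m < j.*2.+1)%N -> mom HL HM m = 0.
  move=> m hm; rewrite momH (@QI_mom0 j.+1 j.+1) ?mulr0 ?subr0; last lia.
  have [hm1|hm1] := ltnP m.+1 (j.+1 + j).
    by rewrite QI_mom0 ?mulr0 ?subr0.
  have em : m = j.*2 by lia.
  rewrite (QI_mom1 hp1) ?em; last lia.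
  by rewrite -signr_odd odd_double /= mulr1 subrr.
have [mP1 sP1 _ _] := hII j.+1 j.
have sP1' : size (P j.+1 j) = (j.*2.+1).+1 by rewrite sP1; congr (_.+1); lia.
have top : mom HL HM j.*2.+1 = 0.
  rewrite -(pr_top mP1 sP1' low).
  rewrite /HL /HM !pr_subl pr_scalel (pr_typeII hII sA1 sB1) subr0.
  rewrite (pr_top (L := QA j.+1 j.+1) (M := QB j.+1 j.+1) mP1 sP1'); last by move=> m hm; rewrite QI_mom0 //; lia.
  rewrite (QI_mom1 hp2); last lia.
  have := hPa (j := j.+1) isT; rewrite subn1 /= => /eqP; rewrite subr_eq => /eqP ->.
  rewrite pr_addr pr_scaler (pr_typeII (n := j) (m := j.+1) hII); last 2 first.
  1,2: by rewrite size_compN.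
  have [mP0 sP0 _ _] := hII j j.
  have sP0' : size (P j j) = (j.*2).+1 by rewrite sP0; congr (_.+1); lia.
  rewrite (pr_top mP0 sP0'); last by move=> m hm; rewrite mom_refl QI_mom0 ?mulr0 //; lia.
  rewrite mom_refl (QI_mom1 hp1); last lia.
  by rewrite -signr_odd odd_double /= !mulr1 addr0 subrr.
have hm0 : forall m, (m < j.+1 + j.+1)%N -> mom HL HM m = 0.
  move=> m hm; have [hm1|hm1] := ltnP m j.*2.+1; first exact: low.
  have -> : m = j.*2.+1 by lia.
  exact: top.
have [h1 h2] := inj sHL sHM hm0.
move/eqP: h1; rewrite /HL subr_eq0 subr_eq => /eqP ->.
move/eqP: h2; rewrite /HM subr_eq0 subr_eq => /eqP ->.
by split; rewrite addrC.
Qed.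
End S.

Unset Implicit Arguments.
Theorem proposition2 (R : realFieldType) (n : nat) (fL fR : nat -> {poly R})
  (QA QB : nat -> nat -> {poly R}) (P : nat -> nat -> {poly R}) (a : nat -> R)
  (k : nat) :
  is_alpert n fL fR ->
  is_typeI QA QB ->
  is_typeII P ->
  (forall j : nat, (1 <= j)%N ->
     P j (j - 1)%N - P (j - 1)%N j = a j *: P (j - 1)%N (j - 1)%N) ->
  (1 <= k <= n)%N ->
  (~~ odd (k + n) ->
     exists c : nat -> R,
       fL k = \sum_((k + n)./2 <= j < n.+1) c j *: QA j j /\
       fR k = \sum_((k + n)./2 <= j < n.+1) c j *: QB j j) /\
  (odd (k + n) ->
     exists d : nat -> R,
       fL k = 2%:R^-1 *: \sum_((k + n).+1./2 <= j < n.+1) (a j * d (j - 1)%N) *: QA j j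
              + \sum_((k + n).-1./2 <= j < n) d j *: QA j.+1 j /\
       fR k = 2%:R^-1 *: \sum_((k + n).+1./2 <= j < n.+1) (a j * d (j - 1)%N) *: QB j j
              + \sum_((k + n).-1./2 <= j < n) d j *: QB j.+1 j).
Proof.
move=> hA hI hII hPa hk.
have /andP [hk1 hkn] := hk.
have [sR hsym _ hmom] := hA k hk.
set sg : R := (-1) ^+ (k + n - 1).
have hL : fL k = sg *: (fR k \Po - 'X).
  apply/eqP; rewrite -subr_eq0; apply/eqP.
  rewrite -[LHS]compNN.
  have -> : (fL k - sg *: (fR k \Po - 'X)) \Po - 'X = 0.
    apply: roots01 => t ht.
    rewrite !(horner_comp, hornerE) opprK (hsym t ht) subrr //.
  by rewrite comp_poly0.
have hR : fR k = sg *: (fL k \Po - 'X).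
  by rewrite hL comp_polyZ compNN scalerA -expr2 sqrr_sign scale1r.
have sL : (size (fL k) <= n)%N.
  by rewrite hL (leq_trans (size_scale_leq _ _)) // size_compN.
have hm : forall m, (m < k + n - 1)%N -> mom (fL k) (fR k) m = 0.
  move=> m hm; apply: hmom; lia.
have hKr : ((k + n - 1) + (n + n - (k + n - 1)) = n + n)%N by lia.
have [w [hw0 [eL eR]]] := Exp hI hKr sL sR hm.
have hodd := odd_double_half (k + n)%N.
split.
- move=> he.
  have ho : odd (k + n - 1).
    case E: (k + n)%N he => [|m] /=; first by lia.
    by rewrite subn1 /= negbK.
  have hs : sg = -1 by rewrite /sg -signr_odd ho.
  set j0 := ((k + n)%N)./2.
  have ej : (k + n = j0.*2)%N by move: hodd; rewrite (negbTE he) add0n.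
  exists (fun j => w (j.*2.-1) - 2%:R^-1 * (a j * w (j.*2.-2))).
  have hw : forall s, (s < j0.*2.-1)%N -> w s = 0 by move=> s hs'; apply: hw0; lia.
  have hj0 : (1 <= j0 <= n.+1)%N by apply/andP; split; lia.
  split.
  + rewrite -(shift_even QA a hj0 hw).
    apply: (asm_even (V := QB) _ _ eL eR).
    * by move=> j; case: (L1 hI j).
    * by move=> j; case: (L2 hI hII hPa j).
    * by rewrite hL hs scaleN1r.
  + rewrite -(shift_even QB a hj0 hw).
    apply: (asm_even (V := QA) _ _ eR eL).
    * by move=> j; case: (L1 hI j).
    * by move=> j; case: (L2 hI hII hPa j).
    * by rewrite hR hs scaleN1r.
- move=> ho.
  have he : ~~ odd (k + n - 1).
    case E: (k + n)%N ho => [|m] //=.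
    by rewrite subn1.
  have hs : sg = 1 by rewrite /sg -signr_odd (negbTE he).
  set j1 := ((k + n)%N)./2.
  have ej : (k + n = j1.*2.+1)%N by move: hodd; rewrite ho add1n.
  have e1 : ((k + n).+1./2 = j1.+1)%N by rewrite ej -doubleS doubleK.
  have e2 : ((k + n).-1./2 = j1)%N by rewrite ej /= doubleK.
  rewrite e1 e2.
  exists (fun j => w j.*2).
  have hw : forall s, (s < j1.*2)%N -> w s = 0 by move=> s hs'; apply: hw0; lia.
  have hj1 : (j1 < n)%N by lia.
  split.
  + rewrite -(shift_odd QA a hj1 hw).
    apply: (asm_odd (V := QB) _ _ eL eR).
    * by move=> j; case: (L1 hI j).
    * by move=> j; case: (L2 hI hII hPa j).
    * by rewrite hL hs scale1r.
  + rewrite -(shift_odd QB a hj1 hw).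
    apply: (asm_odd (V := QA) _ _ eR eL).
    * by move=> j; case: (L1 hI j).
    * by move=> j; case: (L2 hI hII hPa j).
    * by rewrite hR hs scale1r.
Qed.
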